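(* Let $t\ge 3$ and let $\mathcal{H}$ be an $n$-vertex $3$-uniform hypergraph that does not contain $K_{2,t}$ as a trace. Let $A$ be the set of edges of $\mathcal{H}$ containing at least one pair of vertices whose co-degree in $\mathcal{H}$ is $1$, and let $B=\mathcal{H}\setminus A$; for a vertex $x$ let $d(x)$ be the number of edges of $B$ containing $x$. For a vertex $x$, let $N_1(x)=\{z: \exists e\in B,\ \{x,z\}\subseteq e\}$ and $N_2(x)=\{z\notin N_1(x)\cup\{x\}: \exists e\in B,\ z\in e,\ e\cap N_1(x)\neq\emptyset\}$. Fix a vertex $v$, and for $u\in N_1(v)$ let $E_u=\{e\in B: e\cap N_1(v)=\{u\}\}$ and $V_u=\{w\in N_2(v): \exists e\in E_u,\ w\in e\}$. Then for all $u\in N_1(v)$, $$|V_u|\ge \frac{2}{3t-3}\left(d(u)-(3t-3)-3(t-1)^2(6t-2)\right).$$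
   Context: A hypergraph $\mathcal{H}$ contains a graph $F$ (vertices $v_1,\dots,v_p$, edges $e_1,\dots,e_q$) as a trace if there exist distinct vertices $w_1,\dots,w_p\in V(\mathcal{H})$ and distinct edges $f_1,\dots,f_q\in E(\mathcal{H})$ such that whenever $e_i=v_\alpha v_\beta$, $f_i\cap\{w_1,\dots,w_p\}=\{w_\alpha,w_\beta\}$. The co-degree of a pair $\{x,y\}$ in $\mathcal{H}$ is the number of edges of $\mathcal{H}$ containing $\{x,y\}$. $\mathcal{H}\setminus A$ denotes the hypergraph on $V(\mathcal{H})$ with edge set $E(\mathcal{H})\setminus A$. *)

(* Defs.v *)
From mathcomp Require Import all_boot all_order all_algebra.
Set Implicit Arguments. Unset Strict Implicit. Unset Printing Implicit Defensive.

Section Hyper.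
Variable T : finType.

Definition uniform (k : nat) (H : {set {set T}}) := forall e, e \in H -> #|e| = k.

(* H contains the graph F = (V, E) as a trace: E is the list of edges
   e_1..e_q of F, each given as an ordered pair of its endpoints. *)
Definition contains_trace (V : finType) (E : seq (V * V)) (H : {set {set T}}) :=
  exists (w : V -> T) (f : 'I_(size E) -> {set T}),
    injective w /\ injective f /\
    forall i : 'I_(size E),
      f i \in H /\
      f i :&: [set w x | x : V] = [set w (tnth (in_tuple E) i).1; w (tnth (in_tuple E) i).2].

Definition codeg (H : {set {set T}}) (x y : T) := #|[set e in H | (x \in e) && (y \in e)]|.

Definition Aset (H : {set {set T}}) :=
  [set e in H | [exists x, exists y,
     [&& x != y, x \in e, y \in e & codeg H x y == 1]]].
Definition Bset (H : {set {set T}}) := H :\: Aset H.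

Definition degB (H : {set {set T}}) (x : T) := #|[set e in Bset H | x \in e]|.

Definition N1 (H : {set {set T}}) (x : T) :=
  [set z | (z != x) && [exists e in Bset H, (x \in e) && (z \in e)]].
Definition N2 (H : {set {set T}}) (x : T) :=
  [set z | (z \notin N1 H x) && (z != x) &&
     [exists e in Bset H, (z \in e) && (e :&: N1 H x != set0)]].

Definition Eu (H : {set {set T}}) (v u : T) :=
  [set e in Bset H | e :&: N1 H v == [set u]].
Definition Vu (H : {set {set T}}) (v u : T) :=
  [set w in N2 H v | [exists e in Eu H v u, w \in e]].
End Hyper.

Definition K2t_edges (t : nat) : seq (('I_2 + 'I_t)%type * ('I_2 + 'I_t)%type) :=
  [seq (inl i, inr j) | i <- enum 'I_2, j <- enum 'I_t].

(* Main.v *)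
Require Import Defs.
From mathcomp Require Import all_boot all_order all_algebra.
From mathcomp Require Import zify.
Set Implicit Arguments. Unset Strict Implicit. Unset Printing Implicit Defensive.
Definition depp (T : finType) (p : rel T) (Z D : {set T}) (i j : T) :=
  (j \in Z) && (j != i) && [forall s, ((s \notin D) && p j s) ==> (s == i)].

Lemma few_heavy (T : finType) (p : rel T) (Z D : {set T}) :
  (forall a b, p a b = p b a) -> [disjoint Z & D] ->
  {in Z, forall i, exists s, (s \notin D) && p i s} ->
  3 * #|[set i in Z | 1 < #|[set j | depp p Z D i j]|]| <= #|Z|.
Proof.
move=> sym dZD opt.
set P := [set i in Z | _].
have f1 : forall i j, depp p Z D i j -> [/\ j \in Z, p i j & j \notin D].
  move=> i j /andP[/andP[jZ _] /forallP F].
  have [s /andP[sD pjs]] := opt j jZ.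
  have := F s; rewrite sD pjs /= => /eqP si; subst s.
  split=> //; first by rewrite sym.
  by rewrite (disjointFr dZD jZ).
have f2 : forall i i' j, depp p Z D i j -> depp p Z D i' j -> i = i'.
  move=> i i' j /andP[/andP[jZ _] /forallP F] /andP[_ /forallP F'].
  have [s /andP[sD pjs]] := opt j jZ.
  have := F s; have := F' s; rewrite sD pjs /= => /eqP <- /eqP <-. done.
have f3 : forall i k, i \in P -> ~~ depp p Z D k i.
  move=> i k; rewrite inE => /andP[iZ]; apply: contraTN => dki.
  rewrite -leqNgt; apply/card_le1_eqP => j1 j2; rewrite !inE => d1 d2.
  move: dki => /andP[_ /forallP F].
  have [_ pj1 nj1] := f1 _ _ d1; have [_ pj2 nj2] := f1 _ _ d2.
  have := F j1; have := F j2; rewrite nj1 nj2 pj1 pj2 /= => /eqP -> /eqP ->. done.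
have key : \sum_(i in P) #|[set j | depp p Z D i j]| <= #|Z| - #|P|.
  have -> : \sum_(i in P) #|[set j | depp p Z D i j]|
        = \sum_(i in P) \sum_(j in Z) (depp p Z D i j : nat).
    apply: eq_bigr => i _; rewrite -sum1dep_card big_mkcond /=.
    rewrite [RHS]big_mkcond /=; apply: eq_bigr => j _.
    case: (boolP (depp p Z D i j)) => d /=; last by case: (j \in Z).
    by have [-> _ _] := f1 _ _ d.
  rewrite exchange_big /=.
  have -> : #|Z| - #|P| = \sum_(j in Z) (j \notin P : nat).
    have PZ : P \subset Z by apply/subsetP=> i; rewrite inE => /andP[].
    rewrite -(cardsID P Z) (setIidPr PZ) addKn -sum1_card big_mkcond /=.
    rewrite [RHS]big_mkcond /=; apply: eq_bigr => j _; rewrite in_setD.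
    by case: (j \in P); case: (j \in Z).
  apply: leq_sum => j jZ.
  rewrite (eq_bigr (fun i => if depp p Z D i j then 1 else 0)); last by move=> i _; case: depp.
  rewrite -big_mkcondr /=.
  case: (boolP (j \in P)) => jP /=.
    rewrite big1 // => i /andP[_ d]; exfalso; move: d; apply/negP; exact: f3.
  rewrite sum1_card; apply/card_le1_eqP => i i'; rewrite ?inE => /andP[_ d] /andP[_ d'].
  first [exact: (f2 _ _ _ d' d) | exact: (esym (f2 _ _ _ d' d))].
have : 2 * #|P| <= \sum_(i in P) #|[set j | depp p Z D i j]|.
  rewrite mulnC -sum_nat_const leq_sum // => i; rewrite inE => /andP[_]; done.
move: key; have : #|P| <= #|Z| by apply: subset_leq_card; apply/subsetP=> i; rewrite inE => /andP[].
lia.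
Qed.

Lemma pick_opt (T : finType) (p : rel T) (Z D : {set T}) i :
  (forall a b, p a b = p b a) -> [disjoint Z & D] ->
  {in Z, forall i, exists s, (s \notin D) && p i s} -> i \in Z ->
  #|[set j | depp p Z D i j]| <= 1 ->
  exists s, [/\ s \notin D, p i s & forall j, depp p Z D i j -> j = s].
Proof.
move=> sym dZD opt iZ c1.
case: (set_0Vmem [set j | depp p Z D i j]) => [E0|[j]].
  have [s /andP[sD ps]] := opt i iZ; exists s; split=> // j dj.
  have : j \in [set j | depp p Z D i j] by rewrite inE.
  by rewrite E0 inE.
rewrite inE => dj; exists j.
have := dj => /andP[/andP[jZ _] /forallP F].
have [s /andP[sD pjs]] := opt j jZ.
have := F s; rewrite sD pjs /= => /eqP si; subst s.
split.
- by rewrite (disjointFr dZD jZ).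
- by rewrite sym.
- move=> j' dj'; move/card_le1_eqP: c1 => c1.
  by apply: c1; rewrite inE.
Qed.

Lemma survive (T : finType) (p : rel T) (Z D : {set T}) i s j :
  {in Z, forall i, exists s, (s \notin D) && p i s} ->
  (forall j, depp p Z D i j -> j = s) -> j \in Z -> j != i -> j != s ->
  exists s', (s' \notin i |: D) && p j s'.
Proof.
move=> opt ds jZ ji js.
case: (boolP [forall s, ((s \notin D) && p j s) ==> (s == i)]) => F.
  have : depp p Z D i j by rewrite /depp jZ ji F.
  by move/ds => /eqP; rewrite (negbTE js).
move/forallPn: F => [s0]; rewrite negb_imply => /andP[/andP[s0D ps0] s0i].
by exists s0; rewrite !inE negb_or s0i s0D ps0.
Qed.

Lemma choice_lemma (T : finType) (px py : rel T) :
  (forall a b, px a b = px b a) -> (forall a b, py a b = py b a) ->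
  (forall a, ~~ px a a) -> (forall a, ~~ py a a) ->
  forall t (Z D : {set T}), [disjoint Z & D] ->
  {in Z, forall i, exists s, (s \notin D) && px i s} ->
  {in Z, forall i, exists s, (s \notin D) && py i s} ->
  3 * t <= #|Z| + 2 ->
  exists S : {set T}, [/\ S \subset Z, #|S| = t &
    {in S, forall i, (exists s, [&& s \notin D, s \notin S & px i s]) /\
                     (exists s, [&& s \notin D, s \notin S & py i s])}].
Proof.
move=> sx sy ix iy t; elim: t => [|t IH] Z D dZD ox oy ct.
  by exists set0; split; rewrite ?sub0set ?cards0 // => i; rewrite inE.
set P := [set i in Z | 1 < #|[set j | depp px Z D i j]|].
set Q := [set i in Z | 1 < #|[set j | depp py Z D i j]|].
have hP := few_heavy sx dZD ox; have hQ := few_heavy sy dZD oy.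
have lt : #|P :|: Q| < #|Z|.
  move: (leq_card_setU P Q) => [le _]; rewrite -/P -/Q in hP hQ *. lia.
have /subsetPn [i iZ iPQ] : ~~ (Z \subset P :|: Q).
  by apply: contraL lt => /subset_leq_card; rewrite leqNgt.
have [iP iQ] : i \notin P /\ i \notin Q by move: iPQ; rewrite in_setU negb_or => /andP[a b]; split.
have c1 : #|[set j | depp px Z D i j]| <= 1 by move: iP; rewrite /P in_set iZ /= -leqNgt.
have c2 : #|[set j | depp py Z D i j]| <= 1 by move: iQ; rewrite /Q in_set iZ /= -leqNgt.
have [s [sD pis ds]] := pick_opt sx dZD ox iZ c1.
have [r [rD pir dr]] := pick_opt sy dZD oy iZ c2.
set Z' := Z :\: [set i; s; r].
have dZD' : [disjoint Z' & i |: D].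
  rewrite disjoint_subset; apply/subsetP => j; rewrite /Z' !inE => /andP[/norP[/norP[ji _] _] jZ].
  by rewrite negb_or ji /= (disjointFr dZD jZ).
have cZ' : 3 * t <= #|Z'| + 2.
  have := cardsD Z [set i; s; r]; have : #|Z :&: [set i; s; r]| <= 3.
    apply: leq_trans (subset_leq_card (subsetIr _ _)) _.
    by rewrite !cardsU !cards1; lia.
  rewrite -/Z'; lia.
have ox' : {in Z', forall j, exists s', (s' \notin i |: D) && px j s'}.
  move=> j; rewrite /Z' !inE => /andP[/norP[/norP[ji js] _] jZ].
  exact: survive ox ds jZ ji js.
have oy' : {in Z', forall j, exists s', (s' \notin i |: D) && py j s'}.
  move=> j; rewrite /Z' !inE => /andP[/norP[/norP[ji _] jr] jZ].
  exact: survive oy dr jZ ji jr.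
have [S' [S'Z cS' HS']] := IH Z' (i |: D) dZD' ox' oy' cZ'.
have iS' : i \notin S'.
  apply/negP => /(subsetP S'Z); rewrite /Z' !inE eqxx. done.
exists (i |: S'); split.
- apply/subsetP => j; rewrite in_setU1 => /orP[/eqP->//|/(subsetP S'Z)].
  by rewrite /Z' inE => /andP[].
- by rewrite cardsU1 iS' cS'.
move=> j; rewrite in_setU1 => /orP[/eqP->|jS].
  split.
  + exists s; rewrite sD pis andbT /= inE negb_or.
    have si : s != i by apply/eqP => e; move: pis; rewrite e (negbTE (ix i)).
    rewrite in_set1 si /=; apply/negP => /(subsetP S'Z); rewrite /Z' !inE eqxx orbT. done.
  + exists r; rewrite rD pir andbT /= inE negb_or.
    have ri : r != i by apply/eqP => e; move: pir; rewrite e (negbTE (iy i)).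
    rewrite in_set1 ri /=; apply/negP => /(subsetP S'Z); rewrite /Z' !inE eqxx !orbT. done.
have [[a /and3P[aD aS pa]] [b /and3P[bD bS pb]]] := HS' j jS.
move: aD bD; rewrite !inE !negb_or => /andP[ai aD] /andP[bi bD].
split; [exists a | exists b]; rewrite ?aD ?bD ?pa ?pb /= in_setU1 negb_or ?ai ?bi ?aS ?bS //.
Qed.
Lemma K2t_uniq t : uniq (K2t_edges t).
Proof.
rewrite /K2t_edges; apply: allpairs_uniq; rewrite ?enum_uniq //.
by move=> [a b] [c d] _ _ /= [-> ->].
Qed.

Lemma K2t_mem t (p : ('I_2 + 'I_t) * ('I_2 + 'I_t)) :
  p \in K2t_edges t -> exists i j, p = (inl i, inr j).
Proof. by case/allpairsP => [[i j] [_ _ ->]]; exists i, j. Qed.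

Lemma build_trace (T : finType) (H : {set {set T}}) t (x y : T) (S : {set T}) :
  x != y -> x \notin S -> y \notin S -> #|S| = t ->
  (forall c, c \in S -> exists s, [&& [set x; c; s] \in H, s \notin S, s != x & s != y]) ->
  (forall c, c \in S -> exists r, [&& [set y; c; r] \in H, r \notin S, r != x & r != y]) ->
  contains_trace (K2t_edges t) H.
Proof.
move=> xy xS yS cS hx hy.
have sz : size (enum S) = t by rewrite -cardE.
pose c (j : 'I_t) := nth x (enum S) j.
have cin j : c j \in S by rewrite -mem_enum mem_nth // sz.
have cinj : injective c.
  move=> j j' /eqP; rewrite /c nth_uniq ?sz ?enum_uniq // => /eqP; exact: val_inj.
pose w (a : 'I_2 + 'I_t) := match a with inl i => if i == ord0 then x else y | inr j => c j end.
have memW z : (z \in [set w a | a : 'I_2 + 'I_t]) = [|| z == x, z == y | z \in S].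
  apply/imsetP/idP.
    move=> [[i|j] _ ->] /=; last by rewrite cin !orbT.
    by case: (i == ord0); rewrite eqxx ?orbT.
  case/or3P => [/eqP->|/eqP->|zS].
  - by exists (inl ord0); rewrite //= eqxx.
  - by exists (inl (Ordinal (isT : 1 < 2))).
  - have zi : index z (enum S) < t by rewrite -sz index_mem mem_enum.
    exists (inr (Ordinal zi)) => //=; by rewrite /c nth_index // mem_enum.
have winj : injective w.
  have yx := xy; rewrite eq_sym in yx.
  move=> [i|j] [i'|j'] /=.
  - case: (boolP (i == ord0)) => [/eqP->|i0]; case: (boolP (i' == ord0)) => [/eqP->|i'0] //.
    + by move=> e; move: xy; rewrite e eqxx.
    + by move=> e; move: xy; rewrite e eqxx.
    + move=> _; congr inl; apply: val_inj; move: i0 i'0; case: i i' => [[|[|m]] ?] [[|[|m']] ?] //.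
  - by case: (i == ord0) => e; [move: xS | move: yS]; rewrite e cin.
  - by case: (i' == ord0) => e; [move: xS | move: yS]; rewrite -e cin.
  - by move/cinj->.
pose sx z := odflt x [pick s | [&& [set x; z; s] \in H, s \notin S, s != x & s != y]].
pose ry z := odflt x [pick r | [&& [set y; z; r] \in H, r \notin S, r != x & r != y]].
have hsx z : z \in S -> [&& [set x; z; sx z] \in H, sx z \notin S, sx z != x & sx z != y].
  move=> zS; rewrite /sx; case: pickP => [s //|F]; have [s] := hx z zS; by rewrite F.
have hry z : z \in S -> [&& [set y; z; ry z] \in H, ry z \notin S, ry z != x & ry z != y].
  move=> zS; rewrite /ry; case: pickP => [s //|F]; have [s] := hy z zS; by rewrite F.
pose F (a b : 'I_2 + 'I_t) : {set T} := match a, b with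
  | inl i, inr j => if i == ord0 then [set x; c j; sx (c j)] else [set y; c j; ry (c j)]
  | _, _ => set0 end.
pose E := K2t_edges t.
pose f (k : 'I_(size E)) := F (tnth (in_tuple E) k).1 (tnth (in_tuple E) k).2.
have Emem (k : 'I_(size E)) : exists i j, tnth (in_tuple E) k = (inl i, inr j).
  apply: K2t_mem; exact: mem_tnth.
have trace k : f k :&: [set w a | a : 'I_2 + 'I_t] =
     [set w (tnth (in_tuple E) k).1; w (tnth (in_tuple E) k).2].
  rewrite /f; have [i [j ->]] := Emem k => /=.
  apply/setP => z; rewrite in_setI memW.
  case: (i == ord0); rewrite !in_setU !in_set1.
  - have /and4P[_ sS sxx sxy] := hsx _ (cin j).
    case: (z =P x) => [->|_] /=; first by [].
    case: (z =P c j) => [->|_] /=; first by rewrite cin !orbT.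
    case: (z =P sx (c j)) => [->|_] //=.
    by rewrite (negbTE sS) (negbTE sxy).
  - have /and4P[_ sS sxx sxy] := hry _ (cin j).
    case: (z =P y) => [->|_] /=; first by rewrite !orbT.
    case: (z =P c j) => [->|_] /=; first by rewrite cin !orbT.
    case: (z =P ry (c j)) => [->|_] /=; last by [].
    by rewrite (negbTE sS) (negbTE sxx).
exists w, f; split; [exact: winj | split].
- move=> k1 k2 e.
  have := trace k1; rewrite e trace.
  have [i1 [j1 e1]] := Emem k1; have [i2 [j2 e2]] := Emem k2.
  rewrite e1 e2 /= => ep.
  have wl i : w (inl i) \notin S by rewrite /=; case: (i == ord0).
  have pq : w (inl i1) = w (inl i2) /\ c j1 = c j2.
    move/setP: ep => ep.
    have h1 := ep (w (inl i1)); have h2 := ep (c j1).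
    rewrite /= !in_set2 !eqxx ?orbT /= in h1 h2.
    move: h1 h2 => /orP[/eqP a1|/eqP a1] /orP[/eqP b1|/eqP b1].
    + by move: (wl i2); rewrite /= -b1 cin.
    + by [].
    + by move: (wl i1); rewrite /= a1 cin.
    + by move: (wl i1); rewrite /= a1 cin.
  case: pq => /winj [ei] /cinj ej; subst i2 j2.
  move: e1; rewrite -e2 => /eqP; rewrite !(tnth_nth (inl ord0, inl ord0)) /=.
  rewrite nth_uniq ?K2t_uniq // => /eqP; exact: val_inj.
- move=> k; split; last exact: trace.
  rewrite /f; have [i [j ->]] := Emem k => /=.
  case: (i == ord0).
  + by have /and4P[] := hsx _ (cin j).
  + by have /and4P[] := hry _ (cin j).
Qed.

Lemma set3_eq (T : finType) (e : {set T}) a b :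
  #|e| = 3 -> a \in e -> b \in e -> a != b ->
  exists c, [/\ c != a, c != b & e = [set a; b; c]].
Proof.
move=> ce ae be ab.
have : #|e :\ a :\ b| == 1.
  move: ce; rewrite (cardsD1 a) ae (cardsD1 b (e :\ a)) !inE eq_sym ab be /=.
  move=> h; apply/eqP; lia.
case/cards1P => c ec.
have : c \in e :\ a :\ b by rewrite ec set11.
rewrite !inE => /and3P[cb ca ce'].
exists c; split => //.
apply/eqP; rewrite eq_sym eqEcard; apply/andP; split.
  by apply/subsetP => z; rewrite !inE => /orP[/orP[]|] /eqP->.
rewrite ce setUC cardsU1 cards2 !inE negb_or ab.
by rewrite ca cb.
Qed.

Lemma other_edge (T : finType) (H : {set {set T}}) e a b :
  uniform 3 H -> e \in Bset H -> a \in e -> b \in e -> a != b ->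
  exists s, [/\ s != a, s != b, [set a; b; s] \in H & [set a; b; s] != e].
Proof.
move=> u3 eB ae be ab.
move: (eB); rewrite /Bset !inE => /andP[eA eH].
have cd : codeg H a b != 1.
  apply: contra eA => c1; rewrite eH /=; apply/existsP; exists a; apply/existsP; exists b.
  by rewrite ab ae be c1.
have : e \in [set e0 in H | (a \in e0) && (b \in e0)] by rewrite !inE eH ae be.
move=> ein.
have : 1 < codeg H a b.
  rewrite /codeg ltn_neqAle eq_sym cd /= card_gt0; apply/set0Pn; by exists e.
rewrite /codeg (cardsD1 e) ein add1n ltnS card_gt0 => /set0Pn [e' ].
rewrite !inE => /andP[e'e /andP[e'H /andP[ae' be']]].
have [s [sa sb es]] := set3_eq (u3 _ e'H) ae' be' ab.
by exists s; rewrite -es.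
Qed.

Lemma card_bigcup_sum (T I : finType) (W : {pred I}) (F : I -> {set T}) :
  #|\bigcup_(w in W) F w| <= \sum_(w in W) #|F w|.
Proof.
elim/big_rec2: _ => [|i B s _ IH]; first by rewrite cards0.
rewrite cardsU; lia.
Qed.

Lemma set3C (T : finType) (x a b : T) : [set x; a; b] = [set x; b; a].
Proof. by apply/setP => z; rewrite !inE -!orbA (orbC (z == a)). Qed.

Lemma no_many (T : finType) (H : {set {set T}}) t x y (Z : {set T}) :
  ~ contains_trace (K2t_edges t) H -> x != y -> x \notin Z -> y \notin Z ->
  {in Z, forall z, exists s, [&& [set x; z; s] \in H, s != x, s != y & s != z]} ->
  {in Z, forall z, exists r, [&& [set y; z; r] \in H, r != x, r != y & r != z]} ->
  #|Z| + 2 < 3 * t.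
Proof.
move=> nt xy xZ yZ hx hy; rewrite ltnNge; apply/negP => ct.
pose px (a b : T) := [&& [set x; a; b] \in H, a \notin [set x; y], b \notin [set x; y] & a != b].
pose py (a b : T) := [&& [set y; a; b] \in H, a \notin [set x; y], b \notin [set x; y] & a != b].
have sx a b : px a b = px b a.
  rewrite /px set3C eq_sym; by case: (_ \in H); case: (a \notin _); case: (b \notin _).
have sy a b : py a b = py b a.
  rewrite /py set3C eq_sym; by case: (_ \in H); case: (a \notin _); case: (b \notin _).
have ix a : ~~ px a a by rewrite /px eqxx !andbF.
have iy a : ~~ py a a by rewrite /py eqxx !andbF.
have zxy z : z \in Z -> z \notin [set x; y].
  move=> zZ; rewrite !inE negb_or; apply/andP; split.
    by apply: contraNneq xZ => <-.
  by apply: contraNneq yZ => <-.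
have dZ : [disjoint Z & (set0 : {set T})] by rewrite -setI_eq0 setI0.
have ox : {in Z, forall i, exists s, (s \notin set0) && px i s}.
  move=> z zZ; have [s /and4P[h sx' sy' sz]] := hx z zZ.
  exists s; rewrite inE /px h zxy //= !inE negb_or sx' sy' /= eq_sym sz.
  done.
have oy : {in Z, forall i, exists s, (s \notin set0) && py i s}.
  move=> z zZ; have [s /and4P[h sx' sy' sz]] := hy z zZ.
  exists s; rewrite inE /py h zxy //= !inE negb_or sx' sy' /= eq_sym sz.
  done.
have [S [SZ cS HS]] := choice_lemma sx sy ix iy dZ ox oy ct.
apply: nt; apply: (build_trace (x := x) (y := y) (S := S)) => //.
- by apply: contra xZ; apply: (subsetP SZ).
- by apply: contra yZ; apply: (subsetP SZ).
- move=> c cS'; have [[s /and3P[_ sS ps]] _] := HS c cS'.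
  move: ps => /and4P[h _ sxy _]; move: sxy; rewrite !inE negb_or => /andP[a b].
  by exists s; rewrite h sS a b.
- move=> c cS'; have [_ [s /and3P[_ sS ps]]] := HS c cS'.
  move: ps => /and4P[h _ sxy _]; move: sxy; rewrite !inE negb_or => /andP[a b].
  by exists s; rewrite h sS a b.
Qed.

Lemma BsubH (T : finType) (H : {set {set T}}) e : e \in Bset H -> e \in H.
Proof. by rewrite /Bset inE => /andP[]. Qed.

Lemma Zbound (T : finType) (H : {set {set T}}) t x y :
  uniform 3 H -> ~ contains_trace (K2t_edges t) H -> x != y ->
  #|[set z | (z \notin [set x; y]) && ([set x; y; z] \in Bset H)]| + 2 < 3 * t.
Proof.
move=> u3 nt xy; apply: (no_many (H := H) (x := x) (y := y) nt xy).
- by rewrite !inE eqxx.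
- by rewrite !inE eqxx orbT.
- move=> z; rewrite in_set => /andP[zxy eB]; move: zxy; rewrite !inE negb_or => /andP[zx zy].
  have xe : x \in [set x; y; z] by rewrite !inE eqxx.
  have ze : z \in [set x; y; z] by rewrite !inE eqxx !orbT.
  have zx' : x != z by rewrite eq_sym.
  have [s [sx sz sH se]] := other_edge u3 eB xe ze zx'.
  exists s; rewrite sH sx sz /= andbT; apply: contraNneq se => ->; by rewrite set3C.
- move=> z; rewrite in_set => /andP[zxy eB]; move: zxy; rewrite !inE negb_or => /andP[zx zy].
  have ye : y \in [set x; y; z] by rewrite !inE eqxx !orbT.
  have ze : z \in [set x; y; z] by rewrite !inE eqxx !orbT.
  have zy' : y != z by rewrite eq_sym.
  have [s [sx sz sH se]] := other_edge u3 eB ye ze zy'.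
  exists s; rewrite sH sx sz /= andbT; apply: contraNneq se => ->.
  apply/eqP/setP => w; rewrite !inE; by case: (w == x); case: (w == y); case: (w == z).
Qed.

Lemma codegB_bound (T : finType) (H : {set {set T}}) t x y :
  uniform 3 H -> ~ contains_trace (K2t_edges t) H -> x != y ->
  #|[set e in Bset H | (x \in e) && (y \in e)]| + 2 < 3 * t.
Proof.
move=> u3 nt xy; apply: leq_ltn_trans (Zbound u3 nt xy); rewrite leq_add2r.
apply: leq_trans (leq_imset_card (fun z => [set x; y; z]) _).
apply: subset_leq_card; apply/subsetP => e; rewrite inE => /andP[eB /andP[xe ye]].
have [c [cx cy ee]] := set3_eq (u3 _ (BsubH eB)) xe ye xy.
apply/imsetP; exists c => //; rewrite in_set -ee eB !inE negb_or cx cy.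
done.
Qed.

Lemma codegB_le (T : finType) (H : {set {set T}}) t x y :
  uniform 3 H -> ~ contains_trace (K2t_edges t) H -> x != y ->
  #|[set e in Bset H | (x \in e) && (y \in e)]| <= 3 * t - 3.
Proof. move=> u3 nt xy; have := codegB_bound u3 nt xy. lia. Qed.

Lemma double_count (A B : finType) (P : {pred A}) (Q : {pred B}) (r : A -> B -> bool) :
  \sum_(a in P) #|[set b in Q | r a b]| = \sum_(b in Q) #|[set a in P | r a b]|.
Proof.
have h1 : forall a, #|[set b in Q | r a b]| = \sum_(b in Q) (r a b : nat).
  move=> a; rewrite -sum1dep_card big_mkcond /= [RHS]big_mkcond /=.
  by apply: eq_bigr => b _; case: (b \in Q); case: (r a b).
have h2 : forall b, #|[set a in P | r a b]| = \sum_(a in P) (r a b : nat).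
  move=> b; rewrite -sum1dep_card big_mkcond /= [RHS]big_mkcond /=.
  by apply: eq_bigr => a _; case: (a \in P); case: (r a b).
rewrite (eq_bigr _ (fun a _ => h1 a)) (eq_bigr _ (fun b _ => h2 b)).
exact: exchange_big.
Qed.

Lemma inN1 (T : finType) (H : {set {set T}}) v z :
  (z \in N1 H v) = (z != v) && [exists e in Bset H, (v \in e) && (z \in e)].
Proof. by rewrite /N1 inE. Qed.

Lemma Eu_bound (T : finType) (H : {set {set T}}) t v u :
  uniform 3 H -> ~ contains_trace (K2t_edges t) H -> u \in N1 H v ->
  2 * #|Eu H v u| <= #|Vu H v u| * (3 * t - 3).
Proof.
move=> u3 nt uN.
have uv : u != v by move: uN; rewrite inN1 => /andP[].
have Efacts e : e \in Eu H v u -> [/\ e \in Bset H, u \in e, v \notin e &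
    forall z, z \in e -> z \in N1 H v -> z = u].
  rewrite /Eu inE => /andP[eB /eqP eN].
  have : u \in e :&: N1 H v by rewrite eN set11.
  rewrite in_setI => /andP[ue _].
  have zu : forall z, z \in e -> z \in N1 H v -> z = u.
    by move=> z ze zN; apply/set1P; rewrite -eN inE ze zN.
  split => //.
  apply/negP => ve.
  have [c [cu cv ee]] := set3_eq (u3 _ (BsubH eB)) ue ve uv.
  have ce : c \in e by rewrite ee !inE eqxx !orbT.
  have : c \in N1 H v.
    rewrite inN1 cv /=; apply/existsP; exists e; by rewrite eB ve ce.
  by move/(zu _ ce)/eqP; rewrite (negbTE cu).
have VuE e : e \in Eu H v u -> [set w in Vu H v u | w \in e] = e :\ u.
  move=> eE; have [eB ue ve zu] := Efacts e eE.
  apply/setP => w; rewrite in_set in_setD1.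
  case: (boolP (w \in e)) => we; rewrite ?andbF ?andbT //.
  case: (w =P u) => [->|wu] /=.
    by rewrite /Vu /N2 !in_set -!inN1 uN.
  rewrite /Vu /N2 !in_set -!inN1.
  have wN : w \notin N1 H v by apply/negP => /(zu _ we) /wu.
  rewrite wN /=.
  have wv : w != v by apply: contraNneq ve => <-.
  rewrite wv /=; apply/andP; split.
    apply/existsP; exists e; rewrite eB we /=; apply/set0Pn; exists u.
    by rewrite inE ue uN.
  by apply/existsP; exists e; rewrite eE.
have s1 : \sum_(e in Eu H v u) #|[set w in Vu H v u | w \in e]| = 2 * #|Eu H v u|.
  rewrite mulnC -sum_nat_const; apply: eq_bigr => e eE.
  rewrite VuE //; have [eB ue _ _] := Efacts e eE.
  by move: (u3 _ (BsubH eB)); rewrite (cardsD1 u) ue => [[]].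
rewrite -s1 double_count -sum_nat_const leq_sum // => w wV.
have wu : u != w.
  move: wV; rewrite /Vu /N2 !in_set -!inN1; apply: contraTneq => <-; by rewrite uN.
have := codegB_bound u3 nt wu.
move=> h; have : #|[set e in Eu H v u | w \in e]| <= #|[set e in Bset H | (u \in e) && (w \in e)]|.
  apply: subset_leq_card; apply/subsetP => e; rewrite in_set => /andP[eE we].
  have [eB ue _ _] := Efacts e eE. by rewrite in_set eB ue we.
move=> h2; apply: leq_trans h2 (codegB_le u3 nt wu).
Qed.

Lemma W2_bound (T : finType) (H : {set {set T}}) t v u :
  uniform 3 H -> ~ contains_trace (K2t_edges t) H -> u \in N1 H v ->
  #|[set w | [&& w \in N1 H v, w != u &
       [exists e in Bset H, [&& u \in e, w \in e & v \notin e]]]]| <= 6 * t - 6.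
Proof.
move=> u3 nt uN.
have uv : u != v by move: uN; rewrite inN1 => /andP[].
set W2 := [set w | _].
set Y1 := [set z | (z \notin [set u; v]) && ([set u; v; z] \in Bset H)].
set Y2 := [set w in W2 | [set u; v; w] \notin Bset H].
have c1 := Zbound u3 nt uv; rewrite -/Y1 in c1.
have vu : v != u by rewrite eq_sym.
have c2 : #|Y2| + 2 < 3 * t.
  apply: (no_many (H := H) (x := v) (y := u) nt vu).
  - by rewrite /Y2 /W2 !in_set eqxx.
  - by rewrite /Y2 /W2 !in_set eqxx !andbF.
  - move=> w; rewrite /Y2 in_set => /andP[wW2 nB]; move: wW2.
    rewrite /W2 in_set => /and3P[wN wu _].
    move: (wN); rewrite inN1 => /andP[wv /existsP[e /and3P[eB ve we]]].
    have vw : v != w by rewrite eq_sym.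
    have [p [pv pw ee]] := set3_eq (u3 _ (BsubH eB)) ve we vw.
    exists p; rewrite -ee (BsubH eB) pv /= pw andbT.
    apply: contraNneq nB => pu; rewrite pu in ee.
    suff -> : [set u; v; w] = e by [].
    rewrite ee; apply/setP => z; rewrite !inE.
    by case: (z == v); case: (z == w); case: (z == u).
  - move=> w; rewrite /Y2 /W2 !in_set -!inN1 => /andP[/and3P[wN wu /existsP[e /and4P[eB ue we ve]]] _].
    have uw : u != w by rewrite eq_sym.
    have [q [qu qw ee]] := set3_eq (u3 _ (BsubH eB)) ue we uw.
    exists q; rewrite -ee (BsubH eB) qu qw /= andbT.
    by apply: contraNneq ve => <-; rewrite ee !inE eqxx !orbT.
have : W2 \subset Y1 :|: Y2.
  apply/subsetP => w wW; rewrite in_setU.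
  case: (boolP ([set u; v; w] \in Bset H)) => B.
    move: wW; rewrite /W2 in_set => /and3P[wN wu _].
    move: wN; rewrite inN1 => /andP[wv _].
    by rewrite /Y1 in_set B andbT !inE negb_or wu wv.
  by rewrite /Y2 in_set wW B orbT.
move/subset_leq_card; have := leq_card_setU Y1 Y2 => [[le _]].
lia.
Qed.

Lemma arith1 t : 3 <= t -> (6 * t - 6) * (3 * t - 3) <= 3 * (t - 1) ^ 2 * (6 * t - 2).
Proof.
move=> t3; have [k ->] : exists k, t = k.+1 by exists t.-1; lia.
have -> : (6 * k.+1 - 6) = 6 * k by lia.
have -> : (3 * k.+1 - 3) = 3 * k by lia.
have -> : k.+1 - 1 = k by lia.
have -> : 6 * k.+1 - 2 = 6 * k + 4 by lia.
rewrite expnS expn1.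
nia.
Qed.

Lemma main_nat (T : finType) (H : {set {set T}}) t v u :
  3 <= t -> uniform 3 H -> ~ contains_trace (K2t_edges t) H -> u \in N1 H v ->
  2 * degB H u <= #|Vu H v u| * (3 * t - 3) + 2 * (3 * t - 3) +
                   2 * (3 * (t - 1) ^ 2 * (6 * t - 2)).
Proof.
move=> t3 u3 nt uN.
have uv : u != v by move: uN; rewrite inN1 => /andP[].
have cW := W2_bound u3 nt uN.
set W2 := [set w | _] in cW.
set A1 := [set e in Bset H | (u \in e) && (v \in e)].
have cA1 : #|A1| <= 3 * t - 3 := codegB_le u3 nt uv.
set A2 := \bigcup_(w in W2) [set e in Bset H | (u \in e) && (w \in e)].
have cA2 : #|A2| <= #|W2| * (3 * t - 3).
  apply: leq_trans (card_bigcup_sum _ _) _.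
  rewrite -sum_nat_const; apply: leq_sum => w; rewrite /W2 in_set => /and3P[_ wu _].
  apply: codegB_le => //; by rewrite eq_sym.
have cE := Eu_bound u3 nt uN.
have cover : [set e in Bset H | u \in e] \subset A1 :|: A2 :|: Eu H v u.
  apply/subsetP => e; rewrite in_set => /andP[eB ue]; rewrite !in_setU.
  case: (boolP (v \in e)) => ve.
    by rewrite /A1 in_set eB ue ve.
  case: (boolP [exists w in N1 H v, (w != u) && (w \in e)]) => ex.
    move/existsP: ex => [w /and3P[wN wu we]].
    apply/orP; left; apply/orP; right; apply/bigcupP; exists w.
      rewrite /W2 in_set wN wu /=; apply/existsP; exists e; by rewrite eB ue we ve.
    by rewrite in_set eB ue we.
  apply/orP; right; rewrite /Eu in_set eB /=; apply/eqP/setP => z.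
  rewrite in_setI in_set1; case: (z =P u) => [->|zu]; first by rewrite ue uN.
  move/existsPn: ex => /(_ z); rewrite andbC; case: (z \in e); case: (z \in N1 H v) => //=.
  by move/eqP: zu => ->.
have cB : degB H u <= #|A1| + #|A2| + #|Eu H v u|.
  rewrite /degB; apply: leq_trans (subset_leq_card cover) _.
  have := leq_card_setU (A1 :|: A2) (Eu H v u) => [[le1 _]].
  have := leq_card_setU A1 A2 => [[le2 _]].
  lia.
have cW' : #|W2| * (3 * t - 3) <= 3 * (t - 1) ^ 2 * (6 * t - 2).
  apply: leq_trans (arith1 t3); exact: leq_mul.
lia.
Qed.

From mathcomp Require Import lra.
Import GRing.Theory Num.Theory.
Local Open Scope ring_scope.

Theorem mainTheorem7 (T : finType) (n t : nat) (H : {set {set T}}) (v : T) :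
  (3 <= t)%N -> #|T| = n -> uniform 3 H ->
  ~ contains_trace (K2t_edges t) H ->
  forall u, u \in N1 H v ->
    (#|Vu H v u|%:R : rat) >=
      2%:R / (3 * t - 3)%N%:R *
        ((degB H u)%:R - (3 * t - 3)%N%:R - (3 * (t - 1) ^ 2 * (6 * t - 2))%N%:R).
Proof.
move=> t3 _ u3 nt u uN.
have h := main_nat t3 u3 nt uN.
set c := (3 * t - 3)%N in h *.
set K := (3 * (t - 1) ^ 2 * (6 * t - 2))%N in h *.
have c0 : (0 < c)%N by rewrite /c; lia.
have c0' : (0 : rat) < c%:R by rewrite ltr0n.
clearbody c K.
set d := degB H u in h *; set V := #|Vu H v u| in h *.
rewrite mulrAC ler_pdivrMr //.
have h' : (2 * d%:R : rat) <= V%:R * c%:R + 2 * c%:R + 2 * K%:R.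
  have : ((2 * d)%N%:R : rat) <= (V * c + 2 * c + 2 * K)%N%:R by rewrite ler_nat.
  rewrite !natrD !natrM => ?; lra.
move: h'; generalize (V%:R * (c%:R : rat)) => P h'.
lra.
Qed.
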